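(* Let $n\ge3$. For every 2-page book drawing $D$ of $K_n$ and every integer $k$ with $0\le k<n/2-1$, \[ E_{\le\le k}(D)\ge 3\binom{k+3}3 . \]
   Context: A 2-page book drawing of $K_n$: vertices on a line (spine), each edge a simple arc in one of the two closed half-planes bounded by the spine; one may take the vertices to be $(1,0),\dots,(n,0)$ and non-spine edges to be semicircles, giving a good drawing. In a good drawing, for distinct vertices $p,q,r$, $r$ is on the left (right) of $\overrightarrow{pq}$ if the triangle formed by edges $pq,qr,rp$ traced in order $p,q,r$ is oriented counterclockwise (clockwise). An edge $pq$ is a $k$-edge if exactly $k$ of the other $n-2$ vertices lie on one side of it (so also an $(n-2-k)$-edge); each edge is a $k$-edge for a unique $0\le k\le\lfloor n/2\rfloor-1$, and $E_k(D)$ counts edges with that index. $E_{\le k}(D)=\sum_{j=0}^kE_j(D)$ and $E_{\le\le k}(D)=\sum_{j=0}^kE_{\le j}(D)=\sum_{i=0}^k(k+1-i)E_i(D)$. *)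

(* Defs.v *)
From mathcomp Require Import all_boot.
Set Implicit Arguments. Unset Strict Implicit. Unset Printing Implicit Defensive.

(* A 2-page book drawing of K_n: vertices 0,...,n-1 placed on the spine in
   this order, and each edge {i,j} (i < j) drawn as a semicircle in the upper
   page (page i j = true) or the lower page (page i j = false).  Only the
   values page i j with i < j are used. *)
Definition book_drawing (n : nat) := 'I_n -> 'I_n -> bool.

Section BookDrawing.
Variables (n : nat) (D : book_drawing n).

Definition upper (a b : 'I_n) : bool :=
  if a < b then D a b else D b a.

Definition omin (x y : 'I_n) : 'I_n := if x < y then x else y.
Definition omax (x y : 'I_n) : 'I_n := if x < y then y else x.

Definition even_order (p q r : 'I_n) : bool :=
  [|| (p < q) && (q < r), (q < r) && (r < p) | (r < p) && (p < q)].

(* For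
   a < b < c, the triangle a -> b -> c -> a of the semicircle drawing is
   counterclockwise iff the edge {a,c} lies in the upper page; an odd
   permutation of the traversal order reverses the orientation. *)
Definition ccw (p q r : 'I_n) : bool :=
  let a := omin p (omin q r) in
  let c := omax p (omax q r) in
  if even_order p q r then upper a c else ~~ upper a c.

Definition left_count (p q : 'I_n) : nat :=
  #|[set r : 'I_n | [&& r != p, r != q & ccw p q r]]|.

(* the unique k with 0 <= k <= n/2 - 1 such that pq is a k-edge *)
Definition edge_index (p q : 'I_n) : nat :=
  minn (left_count p q) (n - 2 - left_count p q).

Definition E (k : nat) : nat :=
  #|[set e : 'I_n * 'I_n | (e.1 < e.2) && (edge_index e.1 e.2 == k)]|.

Definition E_le (k : nat) : nat := \sum_(j < k.+1) E j.

Definition E_lele (k : nat) : nat := \sum_(j < k.+1) E_le j.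

End BookDrawing.

(* Main.v *)
Require Import Defs.
From mathcomp Require Import all_boot zify.
Set Implicit Arguments. Unset Strict Implicit. Unset Printing Implicit Defensive.

Lemma sum_bool_card (T : finType) (P : pred T) : \sum_x (P x : nat) = #|P|.
Proof.
rewrite -sum1_card [RHS]big_mkcond /=; apply: eq_bigr => x _; by rewrite unfold_in; case: (P x).
Qed.

Lemma sum_seq_count (T : Type) (r : seq T) (Q : pred T) :
  \sum_(x <- r) (Q x : nat) = count Q r.
Proof. elim: r => [|a r IH]; by rewrite ?big_nil ?big_cons ?IH. Qed.

Lemma PH n (P : pred 'I_n) (F : 'I_n -> nat) M t :
  {in P &, injective F} -> (forall x, P x -> F x < M) ->
  M <= \sum_x (P x : nat) -> t < M -> t.+1 <= \sum_x ((P x && (F x <= t)) : nat).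
Proof.
move=> inj bnd hM ht.
have -> : \sum_x ((P x && (F x <= t)) : nat) = \sum_(x <- enum P) ((F x <= t) : nat).
  rewrite big_enum /= [RHS]big_mkcond /=.
  apply: eq_bigr => x _; rewrite unfold_in; by case: (P x).
rewrite sum_seq_count.
set s := [seq F x | x <- enum P].
have us : uniq s.
  rewrite map_inj_in_uniq ?enum_uniq // => x y; rewrite !mem_enum; exact: inj.
have sz : size s = #|P| by rewrite size_map -cardE.
rewrite (_ : count _ (enum P) = count (fun y => y <= t) s); last by rewrite count_map.
have h1 := count_predC (fun y => y <= t) s.
have h2 : count (predC (fun y => y <= t)) s <= M - t.+1.
  rewrite -size_filter.
  have -> : M - t.+1 = size (iota t.+1 (M - t.+1)) by rewrite size_iota.
  apply: uniq_leq_size; first exact: filter_uniq.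
  move=> y; rewrite mem_filter /= => /andP [hy /mapP [x hx Hy]]; subst y.
  rewrite mem_iota; rewrite mem_enum in hx; have := bnd x hx; rewrite -ltnNge in hy; lia.
rewrite sum_bool_card in hM. rewrite sz in h1; move: h1 h2 hM ht; set c1 := count _ s; set c2 := count _ s; set cc := #|P|; move=> h1 h2 hM ht. clearbody c1 c2 cc; lia.
Qed.

Lemma sum_range n lo hi : \sum_(r < n) ((lo <= r) && (r < hi) : nat) = minn hi n - lo.
Proof.
elim: n => [|n IH]; first by rewrite big_ord0; lia.
rewrite big_ord_recr /= IH.
case: (leqP lo n) => h1; case: (ltnP n hi) => h2 /=; lia.
Qed.

Definition cnt n (P : pred 'I_n) lo hi := \sum_(r < n) ((lo <= r) && (r < hi) && P r : nat).

Lemma cnt_le n (P : pred 'I_n) lo hi : cnt P lo hi <= hi - lo.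
Proof.
apply: (@leq_trans (\sum_(r < n) ((lo <= r) && (r < hi) : nat))).
  apply: leq_sum => r _; by case: (lo <= r); case: (r < hi); case: (P r).
rewrite sum_range; lia.
Qed.

Lemma cnt_split n (P : pred 'I_n) lo mid hi : lo <= mid <= hi ->
  cnt P lo hi = cnt P lo mid + cnt P mid hi.
Proof.
move=> /andP [h1 h2]; rewrite /cnt -big_split /=; apply: eq_bigr => r _.
case: (P r); case: (leqP lo r) => a; case: (ltnP r hi) => b; case: (ltnP r mid) => c;
  rewrite /= ?andbT ?andbF; try lia.
Qed.

Lemma cnt_single n (P : pred 'I_n) (b : 'I_n) : cnt P b b.+1 = P b.
Proof.
rewrite /cnt (bigD1 b) //= leqnn ltnSn /= big1 ?addn0 // => r /negbTE hr.
have : (r : nat) != b by rewrite -(inj_eq val_inj) /= in hr; rewrite hr.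
move=> hr'; case: (leqP b r) => a //=; rewrite ltnS; case: (leqP r b) => c //=; lia.
Qed.

Lemma cnt_const n (c : bool) lo hi : hi <= n -> cnt (fun _ : 'I_n => c) lo hi = c * (hi - lo).
Proof.
move=> h; rewrite /cnt; case: c.
  rewrite mul1n (_ : hi - lo = minn hi n - lo); last by rewrite (minn_idPl h).
  rewrite -(sum_range n lo hi); apply: eq_bigr => r _; by rewrite andbT.
rewrite mul0n big1 // => r _; by rewrite andbF.
Qed.

Ltac cmps a b := 
  let h := fresh in
  first [ have h : (a < b) = true by lia | have h : (a < b) = false by lia ];
  rewrite ?h; clear h.

Lemma ccw_lt n (D : book_drawing n) (p q r : 'I_n) : r < p -> p < q -> ccw D p q r = upper D r q.
Proof.
move=> h1 h2; rewrite /ccw /even_order /omin /omax.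
do 2 (cmps p q; cmps q r; cmps r p; cmps p r; cmps r q; cmps q p); done.
Qed.

Lemma ccw_mid n (D : book_drawing n) (p q r : 'I_n) : p < r -> r < q -> ccw D p q r = ~~ upper D p q.
Proof.
move=> h1 h2; rewrite /ccw /even_order /omin /omax.
do 2 (cmps p q; cmps q r; cmps r p; cmps p r; cmps r q; cmps q p); done.
Qed.

Lemma ccw_gt n (D : book_drawing n) (p q r : 'I_n) : p < q -> q < r -> ccw D p q r = upper D p r.
Proof.
move=> h1 h2; rewrite /ccw /even_order /omin /omax.
do 2 (cmps p q; cmps q r; cmps r p; cmps p r; cmps r q; cmps q p); done.
Qed.

Lemma sum_eqi (x J : nat) : \sum_(i < J) (x == i : nat) = (x < J).
Proof.
elim: J => [|J IH]; first by rewrite big_ord0.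
rewrite big_ord_recr /= IH; case: (ltngtP x J) => h; try lia.
Qed.

Lemma sum_lei (x K : nat) : \sum_(t < K) (x <= t : nat) = K - x.
Proof.
elim: K => [|K IH]; first by rewrite big_ord0.
rewrite big_ord_recr /= IH; case: (leqP x K) => h; lia.
Qed.

Lemma sum_succ (K : nat) : \sum_(t < K) t.+1 = 'C(K.+1, 2).
Proof.
elim: K => [|K IH]; first by rewrite big_ord0.
by rewrite big_ord_recr /= IH [in RHS]binS bin1.
Qed.

Lemma sum_eq1 (T : finType) (a : T) : \sum_(r : T) (r == a : nat) = 1.
Proof.
rewrite (bigD1 a) //= eqxx big1 // => r /negbTE ->; done.
Qed.

Definition W n (D : book_drawing n) k :=
  \sum_(p < n) \sum_(q < n) ((p < q) * (k.+1 - edge_index D p q)).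

Lemma card_sumb (T : finType) (P : pred T) : #|[set x | P x]| = \sum_x (P x : nat).
Proof. by rewrite sum_bool_card cardsE. Qed.

Lemma E_sum n (D : book_drawing n) j :
  E D j = \sum_(p < n) \sum_(q < n) ((p < q) && (edge_index D p q == j) : nat).
Proof. by rewrite /E card_sumb pair_bigA. Qed.

Lemma E_le_sum n (D : book_drawing n) j :
  E_le D j = \sum_(p < n) \sum_(q < n) ((p < q) * (edge_index D p q <= j)).
Proof.
rewrite /E_le.
under eq_bigr => i _ do rewrite E_sum.
rewrite exchange_big /=; apply: eq_bigr => p _.
rewrite exchange_big /=; apply: eq_bigr => q _.
case: (p < q) => /=; last by rewrite big1.
by rewrite mul1n sum_eqi ltnS.
Qed.

Lemma E_lele_W n (D : book_drawing n) k : E_lele D k = W D k.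
Proof.
rewrite /E_lele /W.
under eq_bigr => i _ do rewrite E_le_sum.
rewrite exchange_big /=; apply: eq_bigr => p _.
rewrite exchange_big /=; apply: eq_bigr => q _.
case: (p < q) => /=; last by rewrite big1.
under eq_bigr => i _ do rewrite mul1n. by rewrite mul1n sum_lei.
Qed.

Lemma lc_sum n (D : book_drawing n) p q :
  left_count D p q = \sum_r ((r != p) && (r != q) && ccw D p q r : nat).
Proof.
rewrite /left_count (card_sumb (fun r => [&& r != p, r != q & ccw D p q r])).
apply: eq_bigr => r _; by rewrite andbA.
Qed.

Lemma sum_neq2 n (p q : 'I_n) : p != q -> \sum_(r : 'I_n) ((r != p) && (r != q) : nat) = n - 2.
Proof.
move=> hpq.
have h1 : \sum_(r : 'I_n) 1 = n by rewrite sum1_card card_ord.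
have h2 : \sum_(r : 'I_n) 1 = \sum_(r : 'I_n) ((r == p) + (r == q) + ((r != p) && (r != q)) : nat).
  apply: eq_bigr => r _; case: (eqVneq r p) => [->|h]; first by rewrite (negbTE hpq).
  by case: (eqVneq r q).
rewrite !big_split /= !sum_eq1 h1 in h2. rewrite [X in _ = X - 2]h2. by rewrite addKn.
Qed.

Lemma lc_compl n (D : book_drawing n) p q : p != q ->
  left_count D p q + \sum_r ((r != p) && (r != q) && ~~ ccw D p q r : nat) = n - 2.
Proof.
move=> h; rewrite lc_sum -big_split -(sum_neq2 h) /=; apply: eq_bigr => r _.
by case: (r != p); case: (r != q); case: (ccw D p q r).
Qed.

Lemma lc_le n (D : book_drawing n) p q : p != q -> left_count D p q <= n - 2.
Proof. move=> h; have := lc_compl D h; lia. Qed.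

Definition Dl m (D : book_drawing m.+1) : book_drawing m :=
  fun i j => D (lift ord0 i) (lift ord0 j).

Lemma lift_lt m (a b : 'I_m) : (lift ord0 a < lift ord0 b) = (a < b).
Proof. by rewrite !lift0 ltnS. Qed.

Lemma ccw_lift m (D : book_drawing m.+1) p q r :
  ccw D (lift ord0 p) (lift ord0 q) (lift ord0 r) = ccw (Dl D) p q r.
Proof.
have omin_l : forall a b : 'I_m, omin (lift ord0 a) (lift ord0 b) = lift ord0 (omin a b).
  by move=> a b; rewrite /omin lift_lt; case: (a < b).
have omax_l : forall a b : 'I_m, omax (lift ord0 a) (lift ord0 b) = lift ord0 (omax a b).
  by move=> a b; rewrite /omax lift_lt; case: (a < b).
have up_l : forall a b : 'I_m, upper D (lift ord0 a) (lift ord0 b) = upper (Dl D) a b.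
  by move=> a b; rewrite /upper lift_lt.
by rewrite /ccw /even_order !lift_lt !omin_l !omax_l up_l.
Qed.

Lemma lc_lift m (D : book_drawing m.+1) p q :
  left_count D (lift ord0 p) (lift ord0 q) =
  left_count (Dl D) p q + ccw D (lift ord0 p) (lift ord0 q) ord0.
Proof.
rewrite !lc_sum big_ord_recl addnC; congr (_ + _).
  apply: eq_bigr => r _; by rewrite !(inj_eq lift_inj) ccw_lift.
Qed.

Lemma W_split m (D : book_drawing m.+1) k :
  W D k = \sum_(q < m.+1) ((0 < q) * (k.+1 - edge_index D ord0 q)) +
          \sum_(p < m) \sum_(q < m) ((p < q) * (k.+1 - edge_index D (lift ord0 p) (lift ord0 q))).
Proof.
rewrite /W big_ord_recl; congr (_ + _); apply: eq_bigr => p _.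
rewrite big_ord_recl /= mul0n add0n; apply: eq_bigr => q _; by rewrite /bump !leq0n !add1n ltnS.
Qed.

Definition bb m (D : book_drawing m.+1) p q k : bool :=
  if ccw D p q ord0 then m.+1 - 2 - left_count D p q <= k else left_count D p q <= k.

Lemma arith m k L L' (c : bool) : L = L' + c -> L <= m.+1 - 2 -> k.*2.+2 < m.+1 ->
  (k - minn L' (m - 2 - L')) +
  ((if c then m.+1 - 2 - L <= k else L <= k) : bool) <= k.+1 - minn L (m.+1 - 2 - L).
Proof.
case: c => h1 h2 h3.
  case: (leqP (m.+1 - 2 - L) k) => h4 /=; lia.
case: (leqP L k) => h4 /=; lia.
Qed.

Lemma step m (D : book_drawing m.+1) k : k.*2.+2 < m.+1 ->
  \sum_(p < m) \sum_(q < m) ((p < q) * (k - edge_index (Dl D) p q)) +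
  \sum_(q < m.+1) ((0 < q) * (k.+1 - edge_index D ord0 q)) +
  \sum_(p < m) \sum_(q < m) ((p < q) * bb D (lift ord0 p) (lift ord0 q) k) <= W D k.
Proof.
move=> hk; rewrite W_split addnAC [X in _ <= X]addnC leq_add2r -big_split /=.
apply: leq_sum => p _; rewrite -big_split /=; apply: leq_sum => q _.
case: (ltnP p q) => hpq; last by rewrite !mul0n.
rewrite !mul1n /edge_index /bb.
have hne : lift ord0 p != lift ord0 q by rewrite (inj_eq lift_inj) neq_ltn hpq.
have := lc_le D hne; rewrite lc_lift => hle.
apply: arith => //.
Qed.

Lemma inj_lt n (P : pred 'I_n) (F : 'I_n -> nat) :
  (forall a b : 'I_n, P a -> P b -> a < b -> F a != F b) -> {in P &, injective F}.
Proof.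
move=> h a b ha hb e; case: (ltngtP a b) => hab.
- by move: (h a b ha hb hab); rewrite e eqxx.
- by move: (h b a hb ha hab); rewrite e eqxx.
- exact: val_inj.
Qed.

Lemma neq0 m (r : 'I_m.+1) : (r != ord0) = (0 < r).
Proof. by rewrite lt0n -(inj_eq val_inj). Qed.

Lemma neqv n (r q : 'I_n) : (r != q) = ((r : nat) != q).
Proof. by rewrite -(inj_eq val_inj). Qed.

Lemma L0_formula m (D : book_drawing m.+1) (q : 'I_m.+1) : 0 < q ->
  left_count D ord0 q = ~~ upper D ord0 q * (q - 1) + cnt (fun r => upper D ord0 r) q.+1 m.+1.
Proof.
move=> hq; rewrite lc_sum -(@cnt_const m.+1 (~~ upper D ord0 q) 1 q); last exact: ltnW.
rewrite /cnt -big_split /=; apply: eq_bigr => r _.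
rewrite neq0 neqv.
case: (posnP r) => h0.
  by rewrite h0.
case: (ltngtP r q) => h /=.
- rewrite (@ccw_mid _ D ord0 q r) //; by rewrite addn0.
- rewrite (@ccw_gt _ D ord0 q r) //; by rewrite ltn_ord.
- done.
Qed.

Lemma L0_inj m (D : book_drawing m.+1) :
  {in (fun q : 'I_m.+1 => 0 < q) &, injective (fun q => left_count D ord0 q)}.
Proof.
apply: inj_lt => a b ha hb hab /=.
rewrite !L0_formula //.
set P := fun r : 'I_m.+1 => upper D ord0 r.
have e1 : cnt P a.+1 b.+1 = cnt P a.+1 b + cnt P b b.+1 by apply: cnt_split; lia.
have e2 : cnt P a.+1 m.+1 = cnt P a.+1 b.+1 + cnt P b.+1 m.+1.
  by apply: cnt_split; have := ltn_ord b; lia.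
have e3 : cnt P b b.+1 = upper D ord0 b by rewrite cnt_single.
have e4 := cnt_le P a.+1 b.
rewrite e2 e1 e3; move: e4; set c2 := cnt P a.+1 b; set c4 := cnt P b.+1 m.+1.
clearbody c2 c4 => e4.
case: (upper D ord0 a); case: (upper D ord0 b) => /=; apply/eqP; lia.
Qed.

Lemma sum_pos m : \sum_(r < m.+1) ((0 < r) : nat) = m.
Proof.
rewrite -[RHS](_ : minn m.+1 m.+1 - 1 = m); last by rewrite minnn subn1.
rewrite -(sum_range m.+1 1 m.+1); apply: eq_bigr => r _; by rewrite ltn_ord andbT.
Qed.

Lemma partA m (D : book_drawing m.+1) k : k.*2.+2 < m.+1 ->
  2 * 'C(k.+2, 2) <= \sum_(q < m.+1) ((0 < q) * (k.+1 - edge_index D ord0 q)).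
Proof.
move=> hk.
set L := fun q : 'I_m.+1 => left_count D ord0 q.
have hL : forall q : 'I_m.+1, 0 < q -> L q <= m.+1 - 2.
  move=> q hq; apply: lc_le; by rewrite eq_sym neq0.
have -> : \sum_(q < m.+1) ((0 < q) * (k.+1 - edge_index D ord0 q)) =
  \sum_(t < k.+1) (\sum_(q < m.+1) ((0 < q) && (L q <= t) : nat) +
                   \sum_(q < m.+1) ((0 < q) && (m.+1 - 2 - L q <= t) : nat)).
  rewrite [RHS](eq_bigr (fun t : 'I_k.+1 => \sum_(q < m.+1)
      (((0 < q) && (L q <= t) : nat) + ((0 < q) && (m.+1 - 2 - L q <= t) : nat)))); last first.
    by move=> t _; rewrite big_split.
  rewrite [RHS]exchange_big /=; apply: eq_bigr => q _.
  case: (posnP q) => hq.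
    by rewrite mul0n big1.
  rewrite mul1n /edge_index big_split /=.
  rewrite (_ : \sum_(i < k.+1) ((L q <= i) : nat) = k.+1 - L q); last exact: sum_lei.
  rewrite (_ : \sum_(i < k.+1) ((m.+1 - 2 - L q <= i) : nat) = k.+1 - (m.+1 - 2 - L q)); last exact: sum_lei.
  have := hL q hq; rewrite /L; lia.
rewrite -sum_succ mul2n -addnn -big_split /=; apply: leq_sum => t _.
have ht : t < m.
  have := ltn_ord t; lia.
apply: leq_add.
  apply: (@PH _ (fun q : 'I_m.+1 => 0 < q) L m t) => //.
  - exact: L0_inj.
  - move=> x hx; have := hL x hx; lia.
  - by rewrite sum_pos.
apply: (@PH _ (fun q : 'I_m.+1 => 0 < q) (fun q => m.+1 - 2 - L q) m t) => //.
- apply: inj_lt => a b ha hb hab /=.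
  have := @L0_inj m D a b ha hb; have := hL a ha; have := hL b hb.
  rewrite /L; move=> h1 h2 h3; apply/eqP => e; have : a = b by apply: h3; lia.
  move=> eab; rewrite eab ltnn in hab; done.
- move=> x hx; have := hL x hx; lia.
- by rewrite sum_pos.
Qed.

Section PB.
Variables (m : nat) (D : book_drawing m.+1) (k : nat) (q : 'I_m.+1).
Let U := upper D ord0 q.
Let w := fun r : 'I_m.+1 => upper D r q == U.
Let G := fun p : 'I_m.+1 => cnt (fun r => ~~ w r) 0 p + w p * (q - 1 - p).

Lemma G_inj : {in (fun p : 'I_m.+1 => p < q) &, injective G}.
Proof.
apply: inj_lt => a b ha hb hab; rewrite /G.
set P := fun r : 'I_m.+1 => ~~ w r.
have e1 : cnt P 0 b = cnt P 0 a + cnt P a b by apply: cnt_split; lia.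
have e2 : cnt P a b = cnt P a a.+1 + cnt P a.+1 b by apply: cnt_split; lia.
have e3 : cnt P a a.+1 = ~~ w a by rewrite cnt_single.
have e4 := cnt_le P a.+1 b.
rewrite e1 e2 e3; move: e4; set c1 := cnt P 0 a; set c2 := cnt P a.+1 b.
clearbody c1 c2 => e4.
case: (w a); case: (w b) => /=; apply/eqP; lia.
Qed.

Lemma G_bnd (p : 'I_m.+1) : p < q -> G p < q.
Proof.
move=> hp; rewrite /G; have := cnt_le (fun r => ~~ w r) 0 p; case: (w p) => /=; lia.
Qed.

Lemma G0 : G ord0 = q - 1.
Proof.
rewrite /G /= (_ : w ord0 = true); last by rewrite /w /U eqxx.
have := cnt_le (fun r => ~~ w r) 0 0; lia.
Qed.

Lemma Xc_bnd (p : 'I_m.+1) : 0 < p -> p < q ->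
  \sum_r ((r != p) && (r != q) && (ccw D p q r == ~~ U) : nat) <= G p + (m.+1 - q.+1).
Proof.
move=> h0 hpq.
have hq := ltn_ord q.
rewrite /G (_ : q - 1 - p = q - p.+1); last lia.
rewrite -(@cnt_const m.+1 (w p) p.+1 q) ?(ltnW hq) //.
rewrite -[m.+1 - q.+1]mul1n -(@cnt_const m.+1 true q.+1 m.+1) //.
rewrite /cnt -!big_split /=; apply: leq_sum => r _.
rewrite !neqv.
case: (ltngtP r p) => h1.
- have h2 : r < q by lia.
  rewrite (@ccw_lt _ D p q r) // (_ : q < r = false); last lia.
  rewrite h2 /= /w; by case: (upper D r q); case: U; rewrite /= ?andbF ?andbT ?leq_b1.
- case: (ltngtP r q) => h3.
  + rewrite (@ccw_mid _ D p q r) //= /w; by case: (upper D p q); case: U.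
  + rewrite ltn_ord /=; by apply: leq_trans (leq_b1 _) (leq_addl _ _).
  + by [].
- by [].
Qed.

Lemma bb_of (p : 'I_m.+1) : 0 < p -> p < q ->
  \sum_r ((r != p) && (r != q) && (ccw D p q r == ~~ U) : nat) <= k -> bb D p q k.
Proof.
move=> h0 hpq hX; rewrite /bb (@ccw_lt _ D p q ord0) // -/U.
have hne : p != q by rewrite neqv neq_ltn hpq.
have hc := lc_compl D hne.
move: hX; case: U => /= hX.
  have e : \sum_r ((r != p) && (r != q) && (ccw D p q r == false) : nat) =
           \sum_r ((r != p) && (r != q) && ~~ ccw D p q r : nat).
    by apply: eq_bigr => r _; case: (ccw D p q r).
  rewrite e in hX; move: hc hX.
  set b := \sum_r ((r != p) && (r != q) && ~~ ccw D p q r : nat).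
  set a := left_count D p q. clearbody a b; lia.
have e : \sum_r ((r != p) && (r != q) && (ccw D p q r == true) : nat) = left_count D p q.
  rewrite lc_sum; by apply: eq_bigr => r _; case: (ccw D p q r).
by rewrite -e.
Qed.

End PB.

Lemma partB_q m (D : book_drawing m.+1) k (q : 'I_m.+1) : k.*2.+2 < m.+1 ->
  q + k.+2 - m.+1 <= \sum_(p < m.+1) (((0 < p) && (p < q)) * bb D p q k).
Proof.
move=> hk.
case: (leqP (q + k.+2) m.+1) => hq.
  by rewrite (_ : q + k.+2 - m.+1 = 0) //; lia.
set t := q + k.+1 - m.+1.
have -> : q + k.+2 - m.+1 = t.+1 by rewrite /t; lia.
have hqm := ltn_ord q.
have hs : q <= \sum_(p < m.+1) ((p < q) : nat).
  rewrite (_ : \sum_(p < m.+1) ((p < q) : nat) = minn q m.+1 - 0); last first.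
    rewrite -sum_range; by apply: eq_bigr.
  lia.
have hPH := PH (@G_inj m D q) (@G_bnd m D q) hs (_ : t < q).
apply: leq_trans (hPH _) _; first lia.
apply: leq_sum => p _.
case: (posnP p) => h0.
  have -> : p = ord0 by apply: val_inj.
  rewrite G0 /=; case: (0 < q) => //=.
  rewrite (_ : q - 1 <= t = false) //; lia.
case: (ltnP p q) => hpq; last by [].
rewrite /= mul1n.
case hG: (_ <= t) => //.
rewrite lt0b; apply: (bb_of (k:=k) h0 hpq).
apply: leq_trans (Xc_bnd D h0 hpq) _.
apply: leq_trans (leq_add (elimT idP hG) (leqnn _)) _.
rewrite /t; lia.
Qed.

Lemma partB m (D : book_drawing m.+1) k : k.*2.+2 < m.+1 ->
  'C(k.+2, 2) <= \sum_(p < m) \sum_(q < m) ((p < q) * bb D (lift ord0 p) (lift ord0 q) k).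
Proof.
move=> hk.
rewrite exchange_big /=.
apply: (@leq_trans (\sum_(q < m) (q + k.+2 - m))); last first.
  apply: leq_sum => q _.
  apply: leq_trans (partB_q D (lift ord0 q) hk) _.
  rewrite big_ord_recl /= mul0n add0n.
  apply: eq_leq; apply: eq_bigr => p _; by rewrite lift_lt.
rewrite -sum_succ.
rewrite (eq_bigr (fun q : 'I_m => \sum_(t < k.+1) ((m.-1 - q <= t) : nat))); last first.
  move=> q _; rewrite sum_lei; have := ltn_ord q; lia.
rewrite exchange_big /=; apply: leq_sum => t _.
have ht : t < m by have := ltn_ord t; lia.
rewrite (eq_bigr (fun q : 'I_m => ((m.-1 - t <= q) && (q < m) : nat))); last first.
  move=> q _; rewrite ltn_ord andbT; have := ltn_ord q.
  case: (leqP (m.-1 - q) t) => h1; case: (leqP (m.-1 - t) q) => h2 //; lia.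
rewrite sum_range minnn; lia.
Qed.

Lemma main_ineq k : forall n (D : book_drawing n), k.*2.+2 < n -> 3 * 'C(k + 3, 3) <= W D k.
Proof.
elim: k => [|k IH] n D hk.
  case: n D hk => [|m] D hk //.
  apply: leq_trans (step D hk).
  have hA := partA D hk; have hB := partB D hk.
  have c1 : 'C(0 + 3, 3) = 1 by [].
  have c2 : 'C(2, 2) = 1 by [].
  rewrite c1; rewrite c2 in hA hB.
  move: hA hB; set A := \sum_(q < m.+1) _; set B := \sum_(p < m) _.
  set V := \sum_(p < m) _. clearbody A B V; lia.
case: n D hk => [|m] D hk //.
apply: leq_trans (step D hk).
have hA := partA D hk; have hB := partB D hk.
have hI := IH m (Dl D) (_ : k.*2.+2 < m).
rewrite /W in hI.
have e : 'C(k.+1 + 3, 3) = 'C(k + 3, 3) + 'C(k.+3, 2).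
  by rewrite addSn binS addn3.
rewrite e; move: hA hB hI.
set A := \sum_(q < m.+1) _; set B := \sum_(p < m) \sum_(q < m) (_ * bb _ _ _ _).
set V := \sum_(p < m) _. clearbody A B V => hA hB hI.
have hk' : k.*2.+2 < m by move: hk; rewrite -!addnn; lia.
have := hI hk'; lia.

Qed.

Theorem theorem6 (n : nat) (D : book_drawing n) (k : nat) :
  3 <= n -> k.*2.+2 < n ->
  3 * 'C(k + 3, 3) <= E_lele D k.
Proof.
move=> _ hk; rewrite E_lele_W; exact: main_ineq.
Qed.
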